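(* There exists a sequence of series-parallel weighted graphs $\{W_n\}_{n=1}^\infty$ such that (1) for each $n$ the underlying unweighted graph of $W_n$ contains the diamond $D_n$ as a subgraph, and (2) there exist $C<\infty$ and maps $f_n:V(W_n)\to\ell_2$ such that each $f_n$ is a bilipschitz embedding of $V(W_n)$ (with its weighted shortest path metric) with distortion at most $C$.
   Context: A weighted graph (positive edge weights) is series-parallel if it can be obtained as follows: start with an edge; in each step add a new vertex and join it to both end vertices of an already existing edge; at the end remove an arbitrary set of edges. A weighted graph is considered as the metric space on its vertices with the weighted shortest path distance. Diamonds: $D_0$ is an edge; $D_i$ is obtained from $D_{i-1}$ by replacing each edge $uv$ by a quadrilateral $u,a,v,b$. The distortion of a bilipschitz map $f$ is $\mathrm{Lip}(f)\cdot\mathrm{Lip}(f^{-1})$. *)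

(* Defs.v *)
From Stdlib Require Import Reals List.
Import ListNotations.
Open Scope R_scope.

(* A weighted graph: vertices are natural numbers satisfying [vert];
   [edge] is the (undirected) adjacency relation; [wt x y] is the weight
   of the edge xy (only meaningful on edges). *)
Record wgraph := WGraph {
  vert : nat -> Prop;
  edge : nat -> nat -> Prop;
  wt : nat -> nat -> R }.

Definition wgraph_wf (G : wgraph) : Prop :=
  (forall x y, edge G x y -> edge G y x) /\
  (forall x y, edge G x y -> vert G x /\ vert G y) /\
  (forall x y, edge G x y -> 0 < wt G x y /\ wt G x y = wt G y x).

Inductive sp_build : (nat -> Prop) -> (nat -> nat -> Prop) -> Prop :=
| spb_edge (a b : nat) : a <> b ->
    sp_build (fun x => x = a \/ x = b)
             (fun x y => (x = a /\ y = b) \/ (x = b /\ y = a))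
| spb_add (V : nat -> Prop) (E : nat -> nat -> Prop) (u v c : nat) :
    sp_build V E -> E u v -> ~ V c ->
    sp_build (fun x => V x \/ x = c)
             (fun x y => E x y \/ (x = c /\ (y = u \/ y = v))
                               \/ (y = c /\ (x = u \/ x = v))).

(* Series-parallel weighted graph: obtained from such a construction by
   removing an arbitrary set of edges (weights arbitrary positive). *)
Definition series_parallel (G : wgraph) : Prop :=
  wgraph_wf G /\
  exists (V : nat -> Prop) (E : nat -> nat -> Prop),
    sp_build V E /\ (forall x, vert G x <-> V x) /\
    (forall x y, edge G x y -> E x y).

Inductive walk_len (G : wgraph) : nat -> nat -> R -> Prop :=
| wl_nil (x : nat) : vert G x -> walk_len G x x 0
| wl_cons (x z y : nat) (d : R) :
    edge G x z -> walk_len G z y d -> walk_len G x y (wt G x z + d).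

(* Connectedness (needed for the shortest-path metric to be a metric). *)
Definition connected (G : wgraph) : Prop :=
  forall x y, vert G x -> vert G y -> exists d, walk_len G x y d.

Definition is_dist (G : wgraph) (x y : nat) (d : R) : Prop :=
  walk_len G x y d /\ forall d', walk_len G x y d' -> d <= d'.

(* Diamond graphs: (number of vertices N, edge list); vertices 0..N-1.
   D_0 is the edge 01; D_{i} replaces each edge uv of D_{i-1} by the
   quadrilateral u,a,v,b with fresh vertices a,b. *)
Fixpoint subdiv (N : nat) (es : list (nat * nat)) : list (nat * nat) :=
  match es with
  | [] => []
  | (u, v) :: t =>
      (u, N) :: (N, v) :: (u, S N) :: (S N, v) :: subdiv (S (S N)) t
  end.

Fixpoint diamond (n : nat) : nat * list (nat * nat) :=
  match n with
  | O => (2%nat, [(0%nat, 1%nat)])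
  | S m => let (N, es) := diamond m in
           (N + 2 * length es, subdiv N es)%nat
  end.

Definition contains_diamond (G : wgraph) (n : nat) : Prop :=
  let (N, es) := diamond n in
  exists phi : nat -> nat,
    (forall i j, (i < N)%nat -> (j < N)%nat -> phi i = phi j -> i = j) /\
    (forall i, (i < N)%nat -> vert G (phi i)) /\
    (forall u v, In (u, v) es -> edge G (phi u) (phi v)).

Definition in_l2 (x : nat -> R) : Prop :=
  exists L, infinite_sum (fun i => (x i) ^ 2) L.

Definition l2_dist (x y : nat -> R) (r : R) : Prop :=
  0 <= r /\ infinite_sum (fun i => (x i - y i) ^ 2) (r ^ 2).

(* f : V(G) -> l_2 is a bilipschitz embedding of (V(G), shortest path metric)
   with distortion Lip(f) * Lip(f^{-1}) <= C: there are constants B >= Lip(f)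
   and A >= Lip(f^{-1}) with A * B <= C. *)
Definition distortion_le (G : wgraph) (f : nat -> nat -> R) (C : R) : Prop :=
  (forall v, vert G v -> in_l2 (f v)) /\
  exists A B : R, 0 < A /\ 0 < B /\ A * B <= C /\
    forall x y d, vert G x -> vert G y -> is_dist G x y d ->
      exists r, l2_dist (f x) (f y) r /\ r <= B * d /\ d <= A * r.

(* Main.v *)
Require Import Defs.
From Stdlib Require Import Reals List Lra Lia Psatz.
Import ListNotations.
Open Scope R_scope.

Definition dN n := fst (diamond n).
Definition des n := snd (diamond n).

Lemma diamond_S m : diamond (S m) = (dN m + 2 * length (des m), subdiv (dN m) (des m))%nat.
Proof. unfold dN, des; simpl; destruct (diamond m); reflexivity. Qed.

Lemma dN_S m : dN (S m) = (dN m + 2 * length (des m))%nat.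
Proof. unfold dN at 1; rewrite diamond_S; reflexivity. Qed.
Lemma des_S m : des (S m) = subdiv (dN m) (des m).
Proof. unfold des at 1; rewrite diamond_S; reflexivity. Qed.

Lemma subdiv_bound : forall es N, (forall u v, In (u,v) es -> (u < N /\ v < N)%nat) ->
  forall u v, In (u,v) (subdiv N es) -> (u < N + 2*length es /\ v < N + 2 * length es)%nat.
Proof.
  induction es as [|[a b] t IH]; intros N H u v Hin; simpl in *.
  - contradiction.
  - assert (Ha := H a b (or_introl eq_refl)).
    destruct Hin as [E|[E|[E|[E|E]]]]; try (inversion E; subst; lia).
    assert (Ht : forall u v, In (u,v) t -> (u < S (S N) /\ v < S (S N))%nat).
    { intros u' v' Hi. specialize (H u' v' (or_intror Hi)). lia. }
    specialize (IH _ Ht u v E). lia.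
Qed.

Lemma subdiv_new : forall es N K, (forall u v, In (u,v) es -> (u < K /\ v < K)%nat) ->
  (K <= N)%nat ->
  forall x, (N <= x < N + 2*length es)%nat ->
  exists u, (u < K)%nat /\ In (u,x) (subdiv N es).
Proof.
  induction es as [|[a b] t IH]; intros N K H HK x Hx; simpl in *.
  - lia.
  - assert (Ha := H a b (or_introl eq_refl)).
    destruct (Nat.eq_dec x N) as [->|Hn].
    { exists a. split; [lia|]. left; reflexivity. }
    destruct (Nat.eq_dec x (S N)) as [->|Hn'].
    { exists a. split; [lia|]. right; right; left; reflexivity. }
    assert (Ht : forall u v, In (u,v) t -> (u < K /\ v < K)%nat).
    { intros u' v' Hi. exact (H u' v' (or_intror Hi)). }
    destruct (IH (S (S N)) K Ht ltac:(lia) x) as [u [Hu Hi]]; [lia|].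
    exists u. split; [exact Hu|right; right; right; right; exact Hi].
Qed.

Lemma des_bound n : forall u v, In (u,v) (des n) -> (u < dN n /\ v < dN n)%nat.
Proof.
  induction n as [|m IH]; intros u v Hi.
  - simpl in Hi. destruct Hi as [E|[]]. inversion E; subst. simpl. unfold dN; simpl; lia.
  - rewrite des_S in Hi. rewrite dN_S. exact (subdiv_bound _ _ IH u v Hi).
Qed.

Lemma dN_ge2 n : (2 <= dN n)%nat.
Proof. induction n; [unfold dN; simpl; lia|rewrite dN_S; lia]. Qed.

Fixpoint anc n := match n with O => des 0 | S m => anc m ++ des (S m) end.

Lemma anc_bound n : forall u v, In (u,v) (anc n) -> (u < dN n /\ v < dN n)%nat.
Proof.
  induction n as [|m IH]; intros u v Hi.
  - exact (des_bound 0 u v Hi).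
  - simpl in Hi. apply in_app_or in Hi. destruct Hi as [Hi|Hi].
    + specialize (IH u v Hi). rewrite dN_S. lia.
    + exact (des_bound _ u v Hi).
Qed.

Lemma anc_parent n x : (1 <= x < dN n)%nat -> exists u, (u < x)%nat /\ In (u,x) (anc n).
Proof.
  induction n as [|m IH]; intros Hx.
  - unfold dN in Hx; simpl in Hx. assert (x = 1%nat) by lia. subst.
    exists 0%nat. split; [lia|]. simpl. left; reflexivity.
  - destruct (Nat.lt_ge_cases x (dN m)) as [Hl|Hg].
    + destruct (IH ltac:(lia)) as [u [Hu Hi]]. exists u. split; [exact Hu|].
      simpl. apply in_or_app. left; exact Hi.
    + rewrite dN_S in Hx.
      destruct (subdiv_new (des m) (dN m) (dN m) (des_bound m) (le_n _) x ltac:(lia)) as [u [Hu Hi]].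
      exists u. split; [lia|]. simpl. apply in_or_app. right. rewrite des_S. exact Hi.
Qed.

Lemma des_in_anc n p : In p (des n) -> In p (anc n).
Proof. destruct n; simpl; auto. intro; apply in_or_app; right; auto. Qed.

Lemma sp_build_sym V E : sp_build V E -> forall x y, E x y -> E y x.
Proof.
  induction 1; intros x y H'; firstorder.
Qed.

Lemma subdiv_build : forall es N V E, sp_build V E -> (forall x, V x <-> (x < N)%nat) ->
  (forall u v, In (u,v) es -> E u v) ->
  exists V' E', sp_build V' E' /\ (forall x, V' x <-> (x < N + 2 * length es)%nat) /\
    (forall u v, E u v -> E' u v) /\ (forall u v, In (u,v) (subdiv N es) -> E' u v).
Proof.
  induction es as [|[a b] t IH]; intros N V E HB HV HE.
  - exists V, E. split; [exact HB|]. split; [intros x; rewrite HV; simpl; lia|].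
    split; [auto|]. simpl; tauto.
  - assert (Hab : E a b) by (apply HE; left; reflexivity).
    assert (HN : ~ V N) by (rewrite HV; lia).
    pose proof (spb_add V E a b N HB Hab HN) as HB1.
    match type of HB1 with sp_build ?V1 ?E1 =>
      assert (HN1 : ~ V1 (S N)) by (simpl; rewrite HV; lia);
      assert (Hab1 : E1 a b) by (left; exact Hab);
      pose proof (spb_add V1 E1 a b (S N) HB1 Hab1 HN1) as HB2 end.
    match type of HB2 with sp_build ?V2 ?E2 =>
      assert (HV2 : forall x, V2 x <-> (x < S (S N))%nat) by (intros x; simpl; rewrite HV; lia);
      assert (HE2 : forall u v, In (u,v) t -> E2 u v) by
        (intros u v Hi; left; left; apply HE; right; exact Hi);
      destruct (IH (S (S N)) V2 E2 HB2 HV2 HE2) as [V' [E' [HB' [HV' [HEE' HS']]]]] end.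
    exists V', E'. split; [exact HB'|]. split; [intros x; rewrite HV'; simpl; lia|].
    split; [intros u v H; apply HEE'; left; left; exact H|].
    intros u v Hi. simpl in Hi.
    destruct Hi as [Hi|[Hi|[Hi|[Hi|Hi]]]]; try (injection Hi; intros; subst; apply HEE').
    + left; right; right; split; [reflexivity|left; reflexivity].
    + left; right; left; split; [reflexivity|right; reflexivity].
    + right; right; split; [reflexivity|left; reflexivity].
    + right; left; split; [reflexivity|right; reflexivity].
    + apply HS'; exact Hi.
Qed.

Lemma anc_build n : exists V E, sp_build V E /\ (forall x, V x <-> (x < dN n)%nat) /\
  (forall u v, In (u,v) (anc n) -> E u v).
Proof.
  induction n as [|m IH].
  - exists (fun x => x = 0%nat \/ x = 1%nat),
      (fun x y => (x = 0%nat /\ y = 1%nat) \/ (x = 1%nat /\ y = 0%nat)).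
    split; [apply spb_edge; lia|]. split; [intros x; unfold dN; simpl; lia|].
    intros u v Hi; simpl in Hi. destruct Hi as [E|[]]. inversion E; subst. left; split; reflexivity.
  - destruct IH as [V [E [HB [HV HE]]]].
    destruct (subdiv_build (des m) (dN m) V E HB HV (fun u v Hi => HE u v (des_in_anc _ _ Hi)))
      as [V' [E' [HB' [HV' [HEE' HS']]]]].
    exists V', E'. split; [exact HB'|]. split; [intros x; rewrite HV', dN_S; lia|].
    intros u v Hi. simpl in Hi. apply in_app_or in Hi. destruct Hi as [Hi|Hi].
    + apply HEE', HE, Hi.
    + rewrite des_S in Hi. apply HS', Hi.
Qed.

Definition Wg (n : nat) : wgraph :=
  WGraph (fun x => (x < dN n)%nat)
         (fun x y => In (x,y) (anc n) \/ In (y,x) (anc n))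
         (fun x y => 2 ^ (Nat.max x y)).

Lemma pow2_pos k : 0 < 2 ^ k.
Proof. apply pow_lt; lra. Qed.

Lemma pow2_le a b : (a <= b)%nat -> 2 ^ a <= 2 ^ b.
Proof. intro; apply Rle_pow; [lra|exact H]. Qed.

Lemma walk_lower n : forall x y d, walk_len (Wg n) x y d ->
  0 <= d /\ (x <> y -> 2 ^ x <= d /\ 2 ^ y <= d).
Proof.
  induction 1 as [x Hx|x z y d Hxz Hw IH]; simpl.
  - split; [lra|]. intro H; now elim H.
  - destruct IH as [H0 H1]. pose proof (pow2_pos (Nat.max x z)).
    split; [lra|]. intros Hxy. split.
    + pose proof (pow2_le x (Nat.max x z) (Nat.le_max_l _ _)). lra.
    + destruct (Nat.eq_dec z y) as [<-|Hzy].
      * pose proof (pow2_le z (Nat.max x z) (Nat.le_max_r _ _)). lra.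
      * destruct (H1 Hzy). lra.
Qed.

Lemma walk_app G x z y d1 d2 : walk_len G x z d1 -> walk_len G z y d2 -> walk_len G x y (d1 + d2).
Proof.
  induction 1 as [x Hx|x w z' d Hxw Hw IH]; intros H2.
  - replace (0 + d2) with d2 by ring. exact H2.
  - replace (wt G x w + d + d2) with (wt G x w + (d + d2)) by ring.
    apply wl_cons; auto.
Qed.

Lemma walk_to0 n : forall x, (x < dN n)%nat -> exists d, walk_len (Wg n) x 0 d /\ d <= 2 * 2 ^ x.
Proof.
  induction x as [x IH] using (well_founded_induction Wf_nat.lt_wf); intros Hx.
  destruct (Nat.eq_dec x 0) as [->|Hx0].
  - exists 0. split; [apply wl_nil; simpl; pose proof (dN_ge2 n); lia|simpl; lra].
  - destruct (anc_parent n x ltac:(lia)) as [u [Hu Hi]].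
    destruct (IH u Hu ltac:(lia)) as [d [Hw Hd]].
    exists (wt (Wg n) x u + d). split.
    + apply wl_cons; [simpl; right; exact Hi|exact Hw].
    + simpl. rewrite Nat.max_l by lia.
      pose proof (pow2_le (S u) x Hu). simpl in H. lra.
Qed.

Lemma walk_from0 n : forall x, (x < dN n)%nat -> exists d, walk_len (Wg n) 0 x d /\ d <= 2 * 2 ^ x.
Proof.
  induction x as [x IH] using (well_founded_induction Wf_nat.lt_wf); intros Hx.
  destruct (Nat.eq_dec x 0) as [->|Hx0].
  - exists 0. split; [apply wl_nil; simpl; pose proof (dN_ge2 n); lia|simpl; lra].
  - destruct (anc_parent n x ltac:(lia)) as [u [Hu Hi]].
    destruct (IH u Hu ltac:(lia)) as [d [Hw Hd]].
    exists (d + (wt (Wg n) u x + 0)). split.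
    + apply walk_app with u; [exact Hw|]. apply wl_cons; [simpl; left; exact Hi|].
      apply wl_nil; simpl; exact Hx.
    + simpl. rewrite Nat.max_r by lia.
      pose proof (pow2_le (S u) x Hu). simpl in H. lra.
Qed.

Definition ind (a : R) (x i : nat) : R := if Nat.eq_dec i x then a else 0.

Lemma sum_ind a x n : (x <= n)%nat -> sum_f_R0 (ind a x) n = a.
Proof.
  assert (H0 : forall m, (m < x)%nat -> sum_f_R0 (ind a x) m = 0).
  { induction m; intros Hm; simpl.
    - unfold ind; destruct (Nat.eq_dec 0 x); [lia|reflexivity].
    - rewrite IHm by lia. unfold ind; destruct (Nat.eq_dec (S m) x); [lia|ring]. }
  induction n; intros Hn.
  - assert (x = 0%nat) by lia; subst. simpl; unfold ind.
    destruct (Nat.eq_dec 0 0); [reflexivity|lia].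
  - simpl. destruct (Nat.eq_dec x (S n)) as [Heq|Hne].
    + rewrite H0 by lia. unfold ind. destruct (Nat.eq_dec (S n) x); [ring|lia].
    + rewrite IHn by lia. unfold ind. destruct (Nat.eq_dec (S n) x); [lia|ring].
Qed.

Lemma inf_sum_ev s l M : (forall n, (M <= n)%nat -> sum_f_R0 s n = l) -> infinite_sum s l.
Proof.
  intros H eps Heps. exists M. intros n Hn. rewrite H by lia. rewrite Rdist_eq. exact Heps.
Qed.

Definition femb (x i : nat) : R := ind (2 ^ x) x i.

Lemma femb_l2 x : in_l2 (femb x).
Proof.
  exists ((2 ^ x) ^ 2). apply inf_sum_ev with x. intros n Hn.
  rewrite <- (sum_ind ((2^x)^2) x n Hn). apply sum_eq. intros i _.
  unfold femb, ind. destruct (Nat.eq_dec i x); ring.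
Qed.

Lemma femb_dist x y : x <> y -> exists r, l2_dist (femb x) (femb y) r /\
   r ^ 2 = (2 ^ x) ^ 2 + (2 ^ y) ^ 2.
Proof.
  intros Hxy. set (s := (2 ^ x) ^ 2 + (2 ^ y) ^ 2).
  assert (Hs : 0 <= s) by (unfold s; nra).
  exists (sqrt s). assert (Hr : sqrt s ^ 2 = s) by (simpl; rewrite Rmult_1_r; apply sqrt_sqrt; exact Hs).
  split; [|exact Hr]. split; [apply sqrt_pos|]. rewrite Hr.
  apply inf_sum_ev with (Nat.max x y). intros n Hn.
  unfold s. rewrite <- (sum_ind ((2^x)^2) x n) by lia.
  rewrite <- (sum_ind ((2^y)^2) y n) by lia. rewrite <- plus_sum.
  apply sum_eq. intros i _. unfold femb, ind.
  destruct (Nat.eq_dec i x); destruct (Nat.eq_dec i y); try lia; ring.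
Qed.

Lemma femb_dist0 x : l2_dist (femb x) (femb x) 0.
Proof.
  split; [lra|]. apply inf_sum_ev with 0%nat. intros n _.
  transitivity (sum_f_R0 (ind 0 0) n).
  - apply sum_eq. intros i _. unfold ind. destruct (Nat.eq_dec i 0); ring.
  - rewrite sum_ind by lia. ring.
Qed.

Theorem theoremT :
  exists W : nat -> wgraph,
    (forall n : nat, (1 <= n)%nat ->
       series_parallel (W n) /\ connected (W n) /\ contains_diamond (W n) n) /\
    exists (C : R) (f : nat -> nat -> nat -> R),
      forall n : nat, (1 <= n)%nat -> distortion_le (W n) (f n) C.
Proof.
  exists Wg. split.
  - intros n _. split; [|split].
    + split.
      * split; [simpl; tauto|]. split.
        -- intros x y [H|H]; simpl; destruct (anc_bound n _ _ H); lia.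
        -- intros x y _; simpl. split; [apply pow2_pos|]. rewrite Nat.max_comm; reflexivity.
      * destruct (anc_build n) as [V [E [HB [HV HE]]]].
        exists V, E. split; [exact HB|]. split.
        -- intros x; simpl; rewrite HV; tauto.
        -- intros x y [H|H]; [apply HE, H|]. apply (sp_build_sym V E HB). apply HE, H.
    + intros x y Hx Hy.
      destruct (walk_to0 n x Hx) as [d1 [H1 _]]. destruct (walk_from0 n y Hy) as [d2 [H2 _]].
      exists (d1 + d2). apply walk_app with 0%nat; assumption.
    + unfold contains_diamond.
      assert (Hdes : forall p, In p (snd (diamond n)) -> In p (anc n)) by
        (intros p Hp; apply des_in_anc, Hp).
      assert (HN : fst (diamond n) = dN n) by reflexivity.
      destruct (diamond n) as [N es]. simpl in Hdes, HN.
      exists (fun i => i). split; [auto|]. split; [simpl; intros i Hi; lia|].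
      intros u v Hi. simpl. left. apply Hdes, Hi.
  - exists 8, (fun _ => femb). intros n _. split; [intros; apply femb_l2|].
    exists 4, 2. split; [lra|]. split; [lra|]. split; [lra|].
    intros x y d Hx Hy [Hw Hmin].
    destruct (Nat.eq_dec x y) as [<-|Hxy].
    + exists 0. split; [apply femb_dist0|].
      destruct (walk_lower n _ _ _ Hw) as [H0 _].
      assert (d <= 0) by (apply Hmin; apply wl_nil; exact Hx). lra.
    + destruct (femb_dist x y Hxy) as [r [Hl Hr]]. exists r. split; [exact Hl|].
      destruct (walk_lower n _ _ _ Hw) as [H0 [Ha Hb]]; [exact Hxy|].
      destruct (walk_to0 n x Hx) as [d1 [H1 Hd1]]. destruct (walk_from0 n y Hy) as [d2 [H2 Hd2]].
      assert (Hd : d <= d1 + d2) by (apply Hmin; apply walk_app with 0%nat; assumption).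
      pose proof (pow2_pos x). pose proof (pow2_pos y).
      destruct Hl as [Hr0 _].
      set (a := 2 ^ x) in *. set (b := 2 ^ y) in *.
      assert (ra : a <= r) by nra. assert (rb : b <= r) by nra.
      split; [|lra].
      assert (r ^ 2 <= (2 * d) ^ 2) by nra. nra.
Qed.
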